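(* Let $p\in\mathbb N$, let $H_1,\ldots,H_p$ be separable Hilbert spaces, let $I_i:H_{p+2-i}\to H_{p+1-i}$ ($i=2,\ldots,p$) be linear operators, and let $B_1,\ldots,B_p$ be linear (possibly unbounded) operators on $H_1$ with $Dom(B):=Dom(B_1)\cap\cdots\cap Dom(B_p)$ non-empty. Let $L$ be a zero-mean square-integrable $H_p$-valued Lévy process, $\delta>0$, $t_i=i\delta$, and assume the increments of $L$ lie in the domain of $I_p\cdots I_2$; set $\epsilon_i:=\delta^{-1}I_p\cdots I_2(L(t_{i+1})-L(t_i))$, $i=0,1,2,\ldots$. Let $\{x_i\}_{i\ge0}\subset H_1$ be defined by $$Q_p\!\left(\frac{\Delta_\delta}{\delta}\right)x_i=\epsilon_i,\qquad i=0,1,2,\ldots,$$ with given initial values $x_0,\ldots,x_{p-1}$, where $Q_p(\lambda)=\lambda^p-B_1\lambda^{p-1}-\cdots-B_{p-1}\lambda-B_p$, i.e. $\delta^{-p}\Delta_\delta^p x_i-\sum_{q=1}^p\delta^{-(p-q)}B_q\Delta_\delta^{p-q}x_i=\epsilon_i$. Assume that $B_1y_1+\cdots+B_py_p\in Dom(B)$ for all $y_1,\ldots,y_p\in Dom(B)$, that $\epsilon_i\in Dom(B)$ for all $i$, and that $x_0,\ldots,x_{p-1}\in Dom(B)$. Then $\{x_i\}_{i\ge0}$ is an AR$(p)$ process in $H_1$ with dynamics $$x_{i+p}=\sum_{q=1}^p\widetilde B_qx_{i+(p-q)}+\delta^p\epsilon_i,$$ where $$\widetilde B_q=(-1)^{q+1}\binom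 pq\mathrm{Id}+\sum_{k=1}^q\delta^kB_k(-1)^{q-k}\binom{p-k}{q-k},\qquad q=1,\ldots,p,$$ and $\mathrm{Id}$ is the identity on $H_1$.
   Context: $\Delta_\delta^n$ is the $n$th order forward difference acting on the sequence via $x_i=x(t_i)$: $\Delta_\delta^nx_i=\sum_{k=0}^n\binom nk(-1)^kx_{i+n-k}$, with $\Delta_\delta^0$ the identity. In the paper the operators $B_q$ arise from operators $A_q:H_{p+1-q}\to H_p$ of an operator matrix via $I_p\cdots I_2A_q=B_qI_pI_{p-1}\cdots I_{q+1}$ for $q=1,\ldots,p-1$ and $B_p:=I_p\cdots I_2A_p$, but only the operators $B_1,\ldots,B_p$ on $H_1$ enter the statement. *)

(* Defs.v *)
From mathcomp Require Import all_boot all_order all_algebra.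
Set Implicit Arguments. Unset Strict Implicit. Unset Printing Implicit Defensive.
Import Order.TTheory GRing.Theory Num.Theory.
Local Open Scope ring_scope.

Definition fdiff (R : ringType) (V : lmodType R) (n : nat) (x : nat -> V) (i : nat) : V :=
  \sum_(k < n.+1) (((-1) ^+ k * ('C(n, k))%:R) *: x (i + n - k)%N).

(* A (possibly unbounded) linear operator between R-vector spaces U and V:
   a map op defined (at least) on a linear subspace dom of U, linear on dom. *)
Definition linear_on (R : ringType) (U V : lmodType R) (dom : pred U) (op : U -> V) : Prop :=
  [/\ 0 \in dom,
      (forall a u v, u \in dom -> v \in dom -> a *: u + v \in dom) &
      (forall a u v, u \in dom -> v \in dom -> op (a *: u + v) = a *: op u + op v)].

Definition common_dom (R : ringType) (V : lmodType R) (p : nat) (D : nat -> pred V) (y : V) : Prop :=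
  forall q, (1 <= q <= p)%N -> y \in D q.

Definition Btilde (R : ringType) (V : lmodType R) (p : nat) (delta : R)
    (B : nat -> V -> V) (q : nat) (y : V) : V :=
  ((-1) ^+ q.+1 * ('C(p, q))%:R) *: y
  + \sum_(1 <= k < q.+1) ((delta ^+ k * (-1) ^+ (q - k) * ('C(p - k, q - k))%:R) *: B k y).

(* Main.v *)
Require Import Defs.
From mathcomp Require Import all_boot all_order all_algebra zify.
Import Order.TTheory GRing.Theory Num.Theory.
Local Open Scope ring_scope.

Lemma tri_exchange (W : zmodType) (F : nat -> nat -> W) n :
  \sum_(1 <= q < n.+1) \sum_(1 <= k < q.+1) F k q
  = \sum_(1 <= k < n.+1) \sum_(k <= q < n.+1) F k q.
Proof.
elim: n => [|n IH]; first by rewrite !big_geq.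
rewrite big_nat_recr // IH /=.
have E : \sum_(1 <= k < n.+2) \sum_(k <= q < n.+2) F k q
   = \sum_(1 <= k < n.+2) (\sum_(k <= q < n.+1) F k q + F k n.+1).
  by apply: eq_big_nat => k /andP[_ hk]; rewrite big_nat_recr.
rewrite E big_split /=; congr (_ + _).
by rewrite [RHS]big_nat_recr //= [X in _ = _ + X]big_geq // addr0.
Qed.

Lemma reindex_tail (W : zmodType) (G : nat -> W) k p : (k <= p)%N ->
  \sum_(k <= q < p.+1) G q = \sum_(j < (p - k).+1) G (k + j)%N.
Proof.
move=> hk; rewrite -{1}[k]add0n big_addn big_mkord subSn //.
by apply: eq_bigr => j _; rewrite addnC.
Qed.

Theorem proposition6 (R : realFieldType) (p : nat)
    (H1 Hp : lmodType R)
    (J : Hp -> H1) (DJ : pred Hp)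
    (B : nat -> H1 -> H1) (D : nat -> pred H1)
    (L : R -> Hp) (delta : R) (x : nat -> H1) :
  linear_on DJ J ->
  (forall q, (1 <= q <= p)%N -> linear_on (D q) (B q)) ->
  (exists y, common_dom p D y) ->
  0 < delta ->
  (forall i : nat, L (i.+1%:R * delta) - L (i%:R * delta) \in DJ) ->
  let eps := fun i : nat => delta^-1 *: J (L (i.+1%:R * delta) - L (i%:R * delta)) in
  (forall y : nat -> H1, (forall q, (1 <= q <= p)%N -> common_dom p D (y q)) ->
      common_dom p D (\sum_(1 <= q < p.+1) B q (y q))) ->
  (forall i, common_dom p D (eps i)) ->
  (forall i, (i < p)%N -> common_dom p D (x i)) ->
  (forall i, delta ^- p *: fdiff p x i
             - \sum_(1 <= q < p.+1) (delta ^- (p - q) *: B q (fdiff (p - q) x i))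
             = eps i) ->
  forall i, x (i + p)%N
            = \sum_(1 <= q < p.+1) Btilde p delta B q (x (i + (p - q))%N)
              + delta ^+ p *: eps i.
Proof.
move=> _ HB _ Hd _ eps Hcl Heps Hx0 Heq.
set S := common_dom p D.
have S0 : S 0 by move=> q hq; case: (HB q hq).
have SC : forall a u v, S u -> S v -> S (a *: u + v).
  by move=> a u v hu hv q hq; case: (HB q hq) => _ hc _; apply: hc; [apply: hu|apply: hv].
have SZ : forall a u, S u -> S (a *: u) by move=> a u hu; rewrite -[_ *: _]addr0; apply: SC.
have SD : forall u v, S u -> S v -> S (u + v) by move=> u v hu hv; rewrite -[u]scale1r; apply: SC.
have BL : forall q, (1 <= q <= p)%N -> forall a u v, S u -> S v -> B q (a *: u + v) = a *: B q u + B q v.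
  by move=> q hq a u v hu hv; case: (HB q hq) => _ _ hl; apply: hl; [apply: hu|apply: hv].
have B0 : forall q, (1 <= q <= p)%N -> B q 0 = 0.
  move=> q hq; have := BL q hq 1 0 0 S0 S0; rewrite !scale1r addr0 => h.
  by apply: (@addrI _ (B q 0)); rewrite addr0 -h.
have BD : forall q, (1 <= q <= p)%N -> forall u v, S u -> S v -> B q (u + v) = B q u + B q v.
  by move=> q hq u v hu hv; rewrite -{1}[u]scale1r BL // scale1r.
have BZ : forall q, (1 <= q <= p)%N -> forall a u, S u -> B q (a *: u) = a *: B q u.
  by move=> q hq a u hu; rewrite -[a *: u]addr0 BL // B0 // addr0.
have fdS : forall n i, (forall j, (j <= n)%N -> S (x (i + n - j)%N)) -> S (fdiff n x i).
  move=> n i h; rewrite /fdiff; apply: big_ind => //.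
  by move=> j _; apply: SZ; apply: h; rewrite -ltnS.
have fdB : forall q, (1 <= q <= p)%N -> forall n i,
    (forall j, (j <= n)%N -> S (x (i + n - j)%N)) ->
    B q (fdiff n x i) = \sum_(k < n.+1) (((-1) ^+ k * ('C(n, k))%:R) *: B q (x (i + n - k)%N)).
  move=> q hq n i h; rewrite /fdiff.
  pose K := fun u w => S u /\ B q u = w.
  suff : K (\sum_(k < n.+1) (((-1) ^+ k * ('C(n, k))%:R) *: x (i + n - k)%N))
            (\sum_(k < n.+1) (((-1) ^+ k * ('C(n, k))%:R) *: B q (x (i + n - k)%N))) by case.
  apply: (big_ind2 K).
  - by split => //; apply: B0.
  - by move=> u1 w1 u2 w2 [h1 e1] [h2 e2]; split; [apply: SD|rewrite BD // e1 e2].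
  - move=> k _; have hk : S (x (i + n - k)%N) by apply: h; rewrite -ltnS.
    by split; [apply: SZ|rewrite BZ].
have key : forall i, (forall j, (j < p)%N -> S (x (i + j)%N)) ->
   S (x (i + p)%N) /\ x (i + p)%N
            = \sum_(1 <= q < p.+1) Btilde p delta B q (x (i + (p - q))%N)
              + delta ^+ p *: eps i.
  move=> i Hi.
  have hidx : forall k j, (1 <= k <= p)%N -> (j <= p - k)%N -> S (x (i + (p - k) - j)%N).
    by move=> k j hk hj; rewrite -addnBA //; apply: Hi; lia.
  set P2 := \sum_(1 <= q < p.+1) delta ^+ q *: B q (fdiff (p - q) x i).
  have EF : fdiff p x i = delta ^+ p *: eps i + P2.
    have dn : delta ^+ p != 0 by apply: expf_neq0; rewrite gt_eqF.
    rewrite -(Heq i) scalerBr scalerA mulfV // scale1r scaler_sumr.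
    have -> : \sum_(1 <= q < p.+1) delta ^+ p *: (delta ^- (p - q) *: B q (fdiff (p - q) x i)) = P2.
      apply: eq_big_nat => q /andP[h1 h2]; rewrite scalerA; congr (_ *: _).
      have hqp : (q <= p)%N by rewrite -ltnS.
      rewrite -{1}(subnK hqp) exprD mulrAC mulfV ?mul1r //.
      by apply: expf_neq0; rewrite gt_eqF.
    by rewrite subrK.
  set P1 := \sum_(1 <= q < p.+1) (((-1) ^+ q.+1 * ('C(p, q))%:R) *: x (i + (p - q))%N).
  have EP1 : P1 = x (i + p)%N - fdiff p x i.
    rewrite /fdiff big_ord_recl /= expr0 mul1r bin0 scale1r subn0 opprD addrA subrr add0r.
    rewrite /P1 big_add1 /= big_mkord -sumrN; apply: eq_bigr => k _.
    by rewrite -scaleNr exprS mulN1r mulNr addnBA //; lia.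
  have SP1 : S P1.
    rewrite /P1 big_nat_cond; apply: big_ind => // q /andP[/andP[h1 h2] _]; apply: SZ; apply: Hi; lia.
  have SP2 : S P2.
    have -> : P2 = \sum_(1 <= q < p.+1) B q (delta ^+ q *: fdiff (p - q) x i).
      apply: eq_big_nat => q hq; rewrite BZ //; by apply: fdS => j hj; apply: hidx.
    apply: Hcl => q hq; apply: SZ; by apply: fdS => j hj; apply: hidx.
  have Ex : x (i + p)%N = P1 + (delta ^+ p *: eps i + P2) by rewrite -EF EP1 subrK.
  split; first by rewrite Ex; apply SD; [exact SP1|apply SD; [apply SZ; apply Heps|exact SP2]].
  rewrite /Btilde big_split /= -/P1.
  have -> : \sum_(1 <= q < p.+1) \sum_(1 <= k < q.+1)
        ((delta ^+ k * (-1) ^+ (q - k) * ('C(p - k, q - k))%:R) *: B k (x (i + (p - q))%N)) = P2.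
    rewrite tri_exchange /P2; apply: eq_big_nat => k /andP[hk1 hk2].
    have hkp : (1 <= k <= p)%N by rewrite hk1 -ltnS.
    rewrite reindex_tail; last by case/andP: hkp.
    rewrite fdB //; last first.
      by move=> j hj; apply: hidx.
    rewrite scaler_sumr; apply: eq_bigr => j _; rewrite scalerA mulrA addKn.
    have hj := ltn_ord j.
    have -> : (i + (p - (k + j)) = i + (p - k) - j)%N by lia.
    by [].
  by rewrite Ex [RHS]addrAC -[RHS]addrA.
have allS : forall n, S (x n).
  elim/ltn_ind => n IHn.
  case: (ltnP n p) => hn; first by apply: Hx0.
  have -> : n = ((n - p) + p)%N by rewrite subnK.
  apply: (key _ _).1 => j hj; apply: IHn; lia.
move=> i; apply: (key i _).2 => j _; apply: allS.
Qed.
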